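(* Suppose $\mathcal U$ is strongly stable with parameters $b>0$, $q\ge1$ (and $a>0$). Then $\mathcal U$ is $L$-Lipschitz on $\mathcal D^\Delta$, i.e. $|\mathcal U(F_1)-\mathcal U(F_2)|\le L\|F_1-F_2\|$ for all $F_1,F_2\in\mathcal D^\Delta$, with $L=b\bigl(1+\max_{i,j\in\mathbb K}\|F^{(i)}-F^{(j)}\|^{q-1}\bigr)$.
   Context: Let $K\ge1$, $\mathbb K=\{1,\dots,K\}$, and let $F^{(1)},\dots,F^{(K)}$ be distribution functions on $\mathbb R$ (the reward distributions of $K$ arms; arm $i$ produces i.i.d. rewards $X^{(i)}_1,X^{(i)}_2,\dots$ with distribution $F^{(i)}$). Let $\hat F^{(i)}_t(y)=\frac1t\sum_{s=1}^t\mathbf 1\{X^{(i)}_s\le y\}$, and let $\hat{\mathcal D}$ be the set of empirical distribution functions $y\mapsto\frac1t\sum_{s\le t}\mathbf 1\{x_s\le y\}$ of all finite real sequences $x_1,\dots,x_t$, $t\ge1$. $\Delta_{K-1}$ is the probability simplex, $F_p=\sum_ip_iF^{(i)}$, $\mathcal D^\Delta=\{F_p:p\in\Delta_{K-1}\}$. $(L,\|\cdot\|)$ is a Banach space of bounded functions on $\mathbb R$ containing $\mathcal D^\Delta\cup\hat{\mathcal D}$, and $\mathcal U:L\to\mathbb R$. $\mathcal U$ is strongly stable if (1) there exist $b>0,q\ge1$ with $|\mathcal U(F)-\mathcal U(G)|\le b(\|F-G\|+\|F-G\|^q)$ for all $F\in\mathcal D^\Delta$, $G\in\mathcal D^\Delta\cup\hat{\mathcal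 D}$, and (2) there is $a>0$ with $\mathbb P(\|\hat F^{(i)}_t-F^{(i)}\|\ge x)\le2\exp(-atx^2)$ for all $i$, $x>0$, $t\ge1$. *)

(* Defs.v *)
From HB Require Import structures.
From mathcomp Require Import all_boot all_order all_algebra.
From mathcomp Require Import all_classical all_reals all_analysis.
Set Implicit Arguments. Unset Strict Implicit. Unset Printing Implicit Defensive.
Import Order.TTheory GRing.Theory Num.Theory.
Import numFieldNormedType.Exports.
Local Open Scope classical_set_scope.
Local Open Scope ring_scope.

Definition is_cdf (R : realType) (F : R -> R) : Prop :=
  {homo F : x y / x <= y} /\
  (forall x : R, F y @[y --> x^'+] --> F x) /\
  (F y @[y --> -oo] --> (0:R)) /\
  (F y @[y --> +oo] --> (1:R)).

Definition in_simplex (R : realType) (K : nat) (p : 'I_K -> R) : Prop :=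
  (forall i, 0 <= p i) /\ \sum_(i < K) p i = 1.

Definition Fmix (R : realType) (K : nat) (F : 'I_K -> R -> R) (p : 'I_K -> R)
  : R -> R := fun y => \sum_(i < K) p i * F i y.

Definition ecdf (R : realType) (t : nat) (x : nat -> R) : R -> R :=
  fun y => t%:R^-1 * \sum_(s < t) (((x s <= y)%R)%:R : R).

Definition iid_with_cdf (R : realType) (d : measure_display) (T : measurableType d)
  (P : probability T R) (X : nat -> T -> R) (F : R -> R) : Prop :=
  (forall s, measurable_fun setT (X s)) /\
  (forall (t : nat) (y : 'I_t -> R),
     P [set w | forall s : 'I_t, X s w <= y s] = (\prod_(s < t) F (y s))%:E).

(* Main.v *)
Require Import Defs.
From HB Require Import structures.
From mathcomp Require Import all_boot all_order all_algebra.
From mathcomp Require Import all_classical all_reals all_analysis.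
Import Order.TTheory GRing.Theory Num.Theory.
Import numFieldNormedType.Exports.
Local Open Scope classical_set_scope.
Local Open Scope ring_scope.

Theorem lemma15
  (R : realType) (K : nat) (hK : (1 <= K)%N)
  (F : 'I_K -> R -> R) (hF : forall i, is_cdf (F i))
  (* the Banach space L, realized as a complete normed space V whose elements
     are (via the injective linear map iota) bounded functions on R *)
  (V : completeNormedModType R) (iota : V -> R -> R)
  (iota_add : forall u v y, iota (u + v) y = iota u y + iota v y)
  (iota_scale : forall (c : R) v y, iota (c *: v) y = c * iota v y)
  (iota_inj : injective iota)
  (iota_bdd : forall v, exists M : R, forall y, `|iota v y| <= M)
  (hDelta : forall p, in_simplex p -> exists v, iota v = Fmix F p)
  (hHat : forall (t : nat) (x : nat -> R), (0 < t)%N -> exists v, iota v = ecdf t x)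
  (U : V -> R)
  (* the elements of L representing F^(1), ..., F^(K) *)
  (g : 'I_K -> V) (hg : forall i, iota (g i) = F i)
  (* rewards of the arms on a probability space *)
  (d : measure_display) (T : measurableType d) (P : probability T R)
  (X : 'I_K -> nat -> T -> R) (hX : forall i, iid_with_cdf P (X i) (F i))
  (* strong stability, condition (1) *)
  (b q : R) (hb : 0 < b) (hq : 1 <= q)
  (stab1 : forall v1 v2 : V,
      (exists p, in_simplex p /\ iota v1 = Fmix F p) ->
      ((exists p, in_simplex p /\ iota v2 = Fmix F p) \/
       (exists (t : nat) (x : nat -> R), (0 < t)%N /\ iota v2 = ecdf t x)) ->
      `|U v1 - U v2| <= b * (`|v1 - v2| + `|v1 - v2| `^ q))
  (* strong stability, condition (2) *)
  (a : R) (ha : 0 < a)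
  (stab2 : forall (i : 'I_K) (x : R) (t : nat), 0 < x -> (0 < t)%N ->
      (P [set w | exists v : V, iota v = ecdf t (fun s => X i s w) /\ (x <= `|v - g i|)%R]
        <= ((2 * expR (- (a * t%:R * x ^+ 2)))%R)%:E)%E) :
  forall v1 v2 : V,
    (exists p, in_simplex p /\ iota v1 = Fmix F p) ->
    (exists p, in_simplex p /\ iota v2 = Fmix F p) ->
    `|U v1 - U v2| <=
      b * (1 + \big[Num.max/0]_(i < K) \big[Num.max/0]_(j < K) (`|g i - g j| `^ (q - 1)))
        * `|v1 - v2|.
Proof.
move=> v1 v2 [p [hp e1]] [p' [hp' e2]].
have iota0 : forall y, iota 0 y = 0.
  by move=> y; rewrite -(scale0r (0:V)) iota_scale mul0r.
have iota_sum : forall (s : seq 'I_K) (f : 'I_K -> V) y,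
    iota (\sum_(i <- s) f i) y = \sum_(i <- s) iota (f i) y.
  move=> s f y; elim: s => [|i s IH]; first by rewrite !big_nil iota0.
  by rewrite !big_cons iota_add IH.
have rep : forall (v : V) r, iota v = Fmix F r -> v = \sum_i r i *: g i.
  move=> v r ev; apply: iota_inj; rewrite ev; apply/funext => y.
  rewrite iota_sum /Fmix; apply: eq_bigr => i _.
  by rewrite iota_scale hg.
rewrite (rep _ _ e1) (rep _ _ e2).
set dd := (\sum_i p i *: g i - \sum_i p' i *: g i : V).
have dE : dd = \sum_i \sum_j (p i * p' j) *: (g i - g j).
  under eq_bigr => i _ do (under eq_bigr => j _ do rewrite scalerBr;
     rewrite sumrB).
  rewrite sumrB /dd; congr (_ - _).
    apply: eq_bigr => i _; rewrite -scaler_suml -mulr_sumr.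
    by case: hp' => _ ->; rewrite mulr1.
  rewrite exchange_big /=; apply: eq_bigr => j _; rewrite -scaler_suml -mulr_suml.
  by case: hp => _ ->; rewrite mul1r.
have k0 : 'I_K * 'I_K by split; exact: (Ordinal hK).
set f := fun k : 'I_K * 'I_K => `|g k.1 - g k.2|.
case: (@arg_maxP _ _ _ k0 xpredT f isT) => k _ Hk.
have dle : `|dd| <= f k.
  rewrite dE; apply: le_trans (ler_norm_sum _ _ _) _.
  apply: (@le_trans _ _ (\sum_i \sum_j (p i * p' j) * f k)).
    apply: ler_sum => i _; apply: le_trans (ler_norm_sum _ _ _) _.
    apply: ler_sum => j _; rewrite normrZ.
    have h0 : 0 <= p i * p' j by apply: mulr_ge0; [case: hp | case: hp'].
    rewrite ger0_norm //; apply: ler_wpM2l => //.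
    exact: (Hk (i, j)).
  have [_ sp'] := hp'; have [_ sp] := hp.
  under eq_bigr => i _ do rewrite -mulr_suml -mulr_sumr sp' mulr1.
  by rewrite -mulr_suml sp mul1r.
set M := \big[Num.max/0]_(i < K) _.
have Mk : `|dd| `^ (q - 1) <= M.
  apply: (@le_trans _ _ (f k `^ (q - 1))).
    apply: ge0_ler_powR; rewrite ?nnegrE ?subr_ge0 //; exact: normr_ge0.
  rewrite /M (bigD1 k.1) //= (bigD1 k.2) //=.
  by rewrite !le_max lexx.
have M0 : 0 <= M by apply: le_trans Mk; exact: powR_ge0.
apply: le_trans (stab1 _ _ _ _) _.
- by exists p; split => //; rewrite -(rep _ _ e1).
- by left; exists p'; split => //; rewrite -(rep _ _ e2).
rewrite -mulrA ler_wpM2l //; first exact: ltW.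
have [->|dn0] := eqVneq `|dd| 0.
  by rewrite powR0 ?mulr0 ?addr0 //; apply/eqP => q0; move: hq; rewrite q0 ler10.
have -> : q = 1 + (q - 1) by rewrite addrC subrK.
rewrite powRD; last by apply/implyP => _.
rewrite -/dd powRr1 ?normr_ge0 // mulrDl mul1r lerD2l [X in _ <= X]mulrC.
apply: ler_wpM2l; [exact: normr_ge0 | exact: Mk].
Qed.
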